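(* Let $G=(V,E)$ be a graph on $V=\{1,\ldots,n\}$ and $b(\mathbf x)=\sum_{ij\in E}a_{ij}x_ix_j$ with $a_{ij}>0$ for all $ij\in E$. Then $Q=\operatorname{conv}(B)$ if and only if $G$ is bipartite.
   Context: $B=\{(\mathbf x,z)\in[0,1]^n\times\mathbb R:z=b(\mathbf x)\}$ and $\operatorname{conv}(B)$ is its convex hull. The McCormick polytopes are $P=\{(\mathbf x,\mathbf y)\in[0,1]^n\times[0,1]^{|E|}: y_{ij}\le x_i,\ y_{ij}\le x_j,\ y_{ij}\ge x_i+x_j-1\ \forall ij\in E\}$ and $Q=\{(\mathbf x,z)\in[0,1]^n\times\mathbb R:\exists\mathbf y\in[0,1]^{|E|}\text{ with }(\mathbf x,\mathbf y)\in P,\ z=\sum_{ij\in E}a_{ij}y_{ij}\}$. *)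

(* Defs.v *)
From HB Require Import structures.
From mathcomp Require Import all_boot all_order all_algebra.
Set Implicit Arguments. Unset Strict Implicit. Unset Printing Implicit Defensive.
Import Order.TTheory GRing.Theory Num.Theory.
Local Open Scope ring_scope.

Definition point (R : realFieldType) (n : nat) := (('I_n -> R) * R)%type.

(* Simple graph on vertex set 'I_n (= {1,...,n}): symmetric irreflexive
   relation e.  Each undirected edge ij is counted once, as the pair (i,j)
   with i < j and e i j. *)
Definition simple_graph (n : nat) (e : rel 'I_n) : Prop :=
  (forall i j, e i j = e j i) /\ (forall i, ~~ e i i).

Definition bipartite (n : nat) (e : rel 'I_n) : Prop :=
  exists c : 'I_n -> bool, forall i j, e i j -> c i != c j.

Definition bilin (R : realFieldType) (n : nat) (e : rel 'I_n)
    (a : 'I_n -> 'I_n -> R) (x : 'I_n -> R) : R :=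
  \sum_(i < n) \sum_(j < n | (i < j)%N && e i j) a i j * x i * x j.

Definition in_box (R : realFieldType) (n : nat) (x : 'I_n -> R) : Prop :=
  forall i, 0 <= x i <= 1.

Definition Bset (R : realFieldType) (n : nat) (e : rel 'I_n)
    (a : 'I_n -> 'I_n -> R) (p : point R n) : Prop :=
  in_box p.1 /\ p.2 = bilin e a p.1.

Definition McCormickP (R : realFieldType) (n : nat) (e : rel 'I_n)
    (x : 'I_n -> R) (y : 'I_n -> 'I_n -> R) : Prop :=
  in_box x /\
  forall i j : 'I_n, (i < j)%N -> e i j ->
    [/\ 0 <= y i j <= 1, y i j <= x i, y i j <= x j & y i j >= x i + x j - 1].

Definition Qset (R : realFieldType) (n : nat) (e : rel 'I_n)
    (a : 'I_n -> 'I_n -> R) (p : point R n) : Prop :=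
  in_box p.1 /\
  exists y : 'I_n -> 'I_n -> R, McCormickP e p.1 y /\
    p.2 = \sum_(i < n) \sum_(j < n | (i < j)%N && e i j) a i j * y i j.

Definition conv (R : realFieldType) (n : nat) (S : point R n -> Prop)
    (p : point R n) : Prop :=
  exists (m : nat) (lam : 'I_m -> R) (pts : 'I_m -> point R n),
    [/\ forall k, 0 <= lam k,
        \sum_(k < m) lam k = 1,
        forall k, S (pts k),
        forall i, p.1 i = \sum_(k < m) lam k * (pts k).1 i
      & p.2 = \sum_(k < m) lam k * (pts k).2].

(* Main.v *)
Require Import Defs.
From HB Require Import structures.
From mathcomp Require Import all_boot all_order all_algebra.
From mathcomp Require Import ring lra.
Import Order.TTheory GRing.Theory Num.Theory.
Local Open Scope ring_scope.
Set Implicit Arguments. Unset Strict Implicit.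

Ltac ifs := repeat (case: ifP; [move=> ? | move/negbT; rewrite -ltNge => ?]).

Definition mn (R : realFieldType) (x y : R) := if x <= y then x else y.
Definition mx0 (R : realFieldType) (x : R) := if 0 <= x then x else 0.
Definition Hf (R : realFieldType) (n : nat) (col : 'I_n -> bool) (u : 'I_n -> R)
  (i j : 'I_n) : R :=
  if col i then (if col j then mn (u i) (u j) else mx0 (u i - u j))
  else (if col j then mx0 (u j - u i) else 1 - (if u i <= u j then u j else u i)).
Definition Hs (R : realFieldType) (ci cj : bool) (ui uj : R) : R :=
  if ci then (if cj then mn ui uj else mx0 (ui - uj))
  else (if cj then mx0 (uj - ui) else 1 - (if ui <= uj then uj else ui)).
Definition fct (R : realFieldType) (c0 u v w : R) :=
  (0 < u /\ v = 1 /\ (1 - c0) * w = u - c0 /\ c0 <= u /\ u <= 1 /\ 0 <= w /\ w <= 1) \/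
  (u = 0 /\ v = 0 /\ w = 0).
Lemma hscal (R : realFieldType) ci cj (c0 ui uj vi vj wi wj : R) :
  0 < c0 -> c0 < 1 -> fct c0 ui vi wi -> fct c0 uj vj wj ->
  Hs ci cj ui uj = c0 * Hs ci cj vi vj + (1 - c0) * Hs ci cj wi wj.
Proof.
move=> h0 h1 [[? [-> [? [? [? [? ?]]]]]]|[-> [-> ->]]] [[? [-> [? [? [? [? ?]]]]]]|[-> [-> ->]]];
  rewrite /Hs /mn /mx0; case: ci; case: cj; ifs; nra.
Qed.

Definition xof (R : realFieldType) (n : nat) (col : 'I_n -> bool) (u : 'I_n -> R) i :=
  if col i then u i else 1 - u i.
Definition zof (R : realFieldType) (n : nat) (e : rel 'I_n) (a : 'I_n -> 'I_n -> R)
  col (u : 'I_n -> R) :=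
  \sum_(i < n) \sum_(j < n | (i < j)%N && e i j) a i j * Hf col u i j.

Lemma conv_ext (R : realFieldType) n (S : point R n -> Prop) (p q : point R n) :
  (forall i, p.1 i = q.1 i) -> p.2 = q.2 -> conv S q -> conv S p.
Proof.
move=> h1 h2 [m [lam [pts [H1 H2 H3 H4 H5]]]].
exists m, lam, pts; split; [exact: H1|exact: H2|exact: H3| |].
  by move=> i; rewrite h1; exact: H4.
by rewrite h2; exact: H5.
Qed.

Lemma conv_single (R : realFieldType) n (S : point R n -> Prop) (p : point R n) :
  S p -> conv S p.
Proof.
move=> hp; exists 1%N, (fun _ => 1), (fun _ => p); split.
- by move=> _; exact: ler01.
- by rewrite big_ord1.
- by [].
- by move=> i; rewrite big_ord1 mul1r.
- by rewrite big_ord1 mul1r.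
Qed.

Lemma conv_mix (R : realFieldType) n (S : point R n -> Prop) (p q r : point R n) (t : R) :
  0 <= t <= 1 -> conv S p -> conv S q ->
  (forall i, r.1 i = t * p.1 i + (1 - t) * q.1 i) -> r.2 = t * p.2 + (1 - t) * q.2 ->
  conv S r.
Proof.
move=> /andP[t0 t1] [m1 [l1 [p1 [A1 B1 C1 D1 E1]]]] [m2 [l2 [p2 [A2 B2 C2 D2 E2]]]] hr1 hr2.
exists (m1 + m2)%N,
  (fun k => match split k with inl k1 => t * l1 k1 | inr k2 => (1 - t) * l2 k2 end),
  (fun k => match split k with inl k1 => p1 k1 | inr k2 => p2 k2 end).
have sl : forall k : 'I_m1, split (lshift m2 k) = inl k := fun k => unsplitK (inl k).
have sr : forall k : 'I_m2, split (rshift m1 k) = inr k := fun k => unsplitK (inr k).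
split.
- move=> k; case: (split k) => k'; apply: mulr_ge0; try lra; [exact: A1|exact: A2].
- rewrite big_split_ord /=.
  rewrite (eq_bigr (fun k => t * l1 k)); last by move=> k _; rewrite sl.
  rewrite (eq_bigr (fun k => (1 - t) * l2 k)); last by move=> k _; rewrite sr.
  rewrite -!mulr_sumr B1 B2; lra.
- by move=> k; case: (split k) => k'; [exact: C1|exact: C2].
- move=> i; rewrite big_split_ord /=.
  rewrite (eq_bigr (fun k => t * (l1 k * (p1 k).1 i))); last by move=> k _; rewrite sl /= mulrA.
  rewrite (eq_bigr (fun k => (1 - t) * (l2 k * (p2 k).1 i))); last by move=> k _; rewrite sr /= mulrA.
  by rewrite -!mulr_sumr hr1 D1 D2.
- rewrite big_split_ord /=.
  rewrite (eq_bigr (fun k => t * (l1 k * (p1 k).2))); last by move=> k _; rewrite sl /= mulrA.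
  rewrite (eq_bigr (fun k => (1 - t) * (l2 k * (p2 k).2))); last by move=> k _; rewrite sr /= mulrA.
  by rewrite -!mulr_sumr hr2 E1 E2.
Qed.

Lemma base (R : realFieldType) n (e : rel 'I_n) a col (u : 'I_n -> R) :
  (forall i, u i = 0 \/ u i = 1) -> Bset e a (xof col u, zof e a col u).
Proof.
move=> h01; split => /=.
  move=> i; rewrite /xof; apply/andP; case: (col i); case: (h01 i) => ->; split; lra.
rewrite /zof /bilin; apply: eq_bigr => i _; apply: eq_bigr => j _.
rewrite -mulrA; congr (_ * _).
rewrite /Hf /xof /mn /mx0; case: (col i); case: (col j);
  case: (h01 i) => ->; case: (h01 j) => ->; ifs; lra.
Qed.

Definition cnt (R : realFieldType) n (u : 'I_n -> R) := #|[pred i | (0 < u i) && (u i < 1)]|.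

Lemma round (R : realFieldType) n (e : rel 'I_n) a col (u : 'I_n -> R) :
  in_box u -> conv (Bset e a) (xof col u, zof e a col u).
Proof.
move=> hu0.
suff H : forall k u, in_box u -> (cnt u <= k)%N -> conv (Bset e a) (xof col u, zof e a col u).
  exact: H _ u hu0 (leqnn _).
clear hu0 u.
elim=> [|k IH] u hu hk.
  have h01 : forall i, u i = 0 \/ u i = 1.
    move=> i; have [hi|hi] := boolP ((0 < u i) && (u i < 1)).
      have : (0 < cnt u)%N by apply/card_gt0P; exists i.
      by rewrite lt0n -leqn0 hk.
    move: hi; rewrite negb_and -!leNgt => /orP[h|h]; [left|right];
      move: (hu i) => /andP[? ?]; lra.
  exact: conv_single (base e a col h01).
have [hk'|hk'] := leqP (cnt u) k; first exact: IH.
have : (0 < cnt u)%N by apply: leq_ltn_trans hk'.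
case/card_gt0P => i0 hi0.
have [c0 [i1 [ec0 hc0 hc1 cge]]] : exists c0 i1, [/\ u i1 = c0, 0 < c0, c0 < 1 &
    forall j, 0 < u j -> c0 <= u j].
  case: (@arg_minP _ _ _ i0 [pred i | (0 < u i) && (u i < 1)] u hi0) => i1.
  rewrite inE => /andP[h1 h2] hmin.
  exists (u i1), i1; split => // j hj.
  have [hj1|hj1] := boolP (u j < 1).
    by apply: hmin; rewrite inE hj hj1.
  move: hj1; rewrite -leNgt => hj1; lra.
have hu0 : forall j, ~~ (0 < u j) -> u j = 0.
  by move=> j; rewrite -leNgt => h; move: (hu j) => /andP[? ?]; lra.
have [w [hw1 hw2]] : exists w : 'I_n -> R,
    (forall j, 0 < u j -> (1 - c0) * w j = u j - c0) /\ (forall j, ~~ (0 < u j) -> w j = 0).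
  exists (fun j => if 0 < u j then (u j - c0) / (1 - c0) else 0); split => j hj.
    by rewrite hj mulrC divfK //; apply/eqP => h; lra.
  by rewrite (negbTE hj).
have [v [hv1 hv2]] : exists v : 'I_n -> R,
    (forall j, 0 < u j -> v j = 1) /\ (forall j, ~~ (0 < u j) -> v j = 0).
  exists (fun j => if 0 < u j then 1 else 0); split => j hj.
    by rewrite hj.
  by rewrite (negbTE hj).
have hwb : in_box w.
  move=> j; have [h|h] := boolP (0 < u j).
    have := hw1 _ h; have := cge _ h; move: (hu j) => /andP[? ?] ? ?.
    apply/andP; split; nra.
  by rewrite hw2 // lexx ler01.
have hv01 : forall j, v j = 0 \/ v j = 1.
  move=> j; have [h|h] := boolP (0 < u j); [right; exact: hv1|left; exact: hv2].
have hlt : (cnt w < cnt u)%N.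
  apply: proper_card; apply/properP; split.
    apply/subsetP => j; rewrite !inE => /andP[h1 h2].
    have hj : 0 < u j by apply: contraTT h1 => /hw2 ->; rewrite ltxx.
    rewrite hj /=; have := hw1 _ hj; move: (hu j) => /andP[? ?] ?; nra.
  exists i1; first by rewrite inE ec0 hc0 hc1.
  rewrite inE negb_and -leNgt.
  have := hw1 i1 (ltac:(by rewrite ec0)); rewrite ec0 => ?.
  apply/orP; left; nra.
have cw := IH w hwb (leq_trans hlt hk).
have hf : forall j, fct c0 (u j) (v j) (w j).
  move=> j; have [h|h] := boolP (0 < u j).
    left; case/andP: (hu j) => ? ?; case/andP: (hwb j) => ? ?.
    by do !split => //; [exact: hv1|exact: hw1|exact: cge].
  by right; rewrite (hu0 _ h) (hv2 _ h) (hw2 _ h).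
have hterm : forall i j, Hf col u i j = c0 * Hf col v i j + (1 - c0) * Hf col w i j.
  by move=> i j; exact: (hscal (col i) (col j) hc0 hc1 (hf i) (hf j)).
apply: (@conv_mix _ _ _ (xof col v, zof e a col v) (xof col w, zof e a col w) _ c0).
- apply/andP; split; lra.
- exact: conv_single (base e a col hv01).
- exact: cw.
- move=> i /=; rewrite /xof; have [h|h] := boolP (0 < u i);
    [rewrite (hv1 _ h); have := hw1 _ h | rewrite (hv2 _ h) (hw2 _ h) (hu0 _ h)];
    case: (col i) => *; lra.
- rewrite /= /zof !mulr_sumr -big_split; apply: eq_bigr => i _.
  rewrite !mulr_sumr -big_split; apply: eq_bigr => j _.
  rewrite hterm /=; ring.
Qed.

Lemma bilin_ge0 (R : realFieldType) n (e : rel 'I_n) (a : 'I_n -> 'I_n -> R) (x : 'I_n -> R) :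
  (forall i j : 'I_n, (i < j)%N -> e i j -> 0 < a i j) -> in_box x ->
  forall i j : 'I_n, (i < j)%N && e i j -> 0 <= a i j * x i * x j.
Proof.
move=> apos hx i j /andP[hij hej].
case/andP: (hx i) => ? ?; case/andP: (hx j) => ? ?.
by rewrite mulr_ge0 // mulr_ge0 // ltW // apos.
Qed.

Lemma conv_Q (R : realFieldType) n (e : rel 'I_n) (a : 'I_n -> 'I_n -> R) (p : point R n) :
  conv (Bset e a) p -> Qset e a p.
Proof.
move=> [m [lam [pts [A B C D E]]]].
have hx : forall k i, 0 <= (pts k).1 i <= 1 := fun k => (C k).1.
have hb : in_box p.1.
  move=> i; rewrite D; apply/andP; split.
    apply: sumr_ge0 => k _; have := A k; case/andP: (hx k i) => *; nra.
  rewrite -B; apply: ler_sum => k _; have := A k; case/andP: (hx k i) => *; nra.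
split => //.
exists (fun i j => \sum_(k < m) lam k * ((pts k).1 i * (pts k).1 j)); split.
  split => // i j _ _.
  have F : forall k, [/\ 0 <= lam k, 0 <= (pts k).1 i * (pts k).1 j,
      (pts k).1 i * (pts k).1 j <= (pts k).1 i, (pts k).1 i * (pts k).1 j <= (pts k).1 j &
      (pts k).1 i <= 1 /\ (pts k).1 i + (pts k).1 j - 1 <= (pts k).1 i * (pts k).1 j].
    move=> k; case/andP: (hx k i) => ? ?; case/andP: (hx k j) => ? ?.
    split; [exact: A|nra|nra|nra|split; nra].
  split.
  - apply/andP; split.
      by apply: sumr_ge0 => k _; have [? ? ? ? [? ?]] := F k; nra.
    by rewrite -B; apply: ler_sum => k _; have [? ? ? ? [? ?]] := F k; nra.
  - by rewrite D; apply: ler_sum => k _; have [? ? ? ? [? ?]] := F k; nra.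
  - by rewrite D; apply: ler_sum => k _; have [? ? ? ? [? ?]] := F k; nra.
  - rewrite D D -B -big_split -sumrB /=; apply: ler_sum => k _.
    have [? ? ? ? [? ?]] := F k; nra.
rewrite E.
transitivity (\sum_(k < m) \sum_(i < n) \sum_(j < n | (i < j)%N && e i j)
    lam k * (a i j * (pts k).1 i * (pts k).1 j)).
  apply: eq_bigr => k _; rewrite (C k).2 /bilin mulr_sumr; apply: eq_bigr => i _.
  by rewrite mulr_sumr.
rewrite exchange_big; apply: eq_bigr => i _; rewrite exchange_big; apply: eq_bigr => j _.
rewrite mulr_sumr; apply: eq_bigr => k _; ring.
Qed.

Lemma two_col (R : realFieldType) (s t : R) : s * t = 0 -> s + t = 1 -> (s == 0) != (t == 0).
Proof.
move=> /eqP; rewrite mulf_eq0 => /orP[/eqP hs|/eqP ht] h.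
  have -> : t = 1 by lra.
  by rewrite hs eqxx oner_eq0.
have -> : s = 1 by lra.
by rewrite ht eqxx oner_eq0.
Qed.

Unset Implicit Arguments.

Theorem mainTheorem10 (R : realFieldType) (n : nat) (e : rel 'I_n)
    (a : 'I_n -> 'I_n -> R) :
  simple_graph e ->
  (forall i j : 'I_n, (i < j)%N -> e i j -> 0 < a i j) ->
  ((forall p : point R n, Qset e a p <-> conv (Bset e a) p) <-> bipartite e).
Proof.
move=> [esym eirr] apos; split; last first.
  move=> [col hcol] p; split; last exact: conv_Q.
  move=> [hb [y [[_ hy] hz]]].
  pose u := fun i => if col i then p.1 i else 1 - p.1 i.
  have hub : in_box u.
    move=> i; rewrite /u; case: (col i); case/andP: (hb i) => ? ?; apply/andP; split; lra.
  have cL := round e a col hub.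
  have cU := round e a (fun _ => true) hb.
  have xu : forall i, xof col u i = p.1 i.
    by move=> i; rewrite /xof /u; case: (col i) => //; ring.
  have hL : zof e a col u <= p.2.
    rewrite hz; apply: ler_sum => i _; apply: ler_sum => j /andP[hij hej].
    apply: ler_wpM2l; first exact: ltW (apos i j hij hej).
    have [/andP[y0 y1] yi yj yx] := hy i j hij hej.
    case/andP: (hb i) => ? ?; case/andP: (hb j) => ? ?.
    move: (hcol i j hej); rewrite /Hf /mx0 /u.
    case: (col i); case: (col j); rewrite ?eqxx //= => _; ifs; lra.
  have hU : p.2 <= zof e a (fun _ => true) p.1.
    rewrite hz; apply: ler_sum => i _; apply: ler_sum => j /andP[hij hej].
    apply: ler_wpM2l; first exact: ltW (apos i j hij hej).
    have [/andP[y0 y1] yi yj yx] := hy i j hij hej.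
    rewrite /Hf /mn /=; ifs; lra.
  set L := zof e a col u in cL hL *.
  set U := zof e a (fun _ => true) p.1 in cU hU *.
  have [t [ht hzt]] : exists t, 0 <= t <= 1 /\ p.2 = t * U + (1 - t) * L.
    have [hlt|hge] := ltP L U.
      exists ((p.2 - L) / (U - L)); split.
        apply/andP; split.
          by apply: divr_ge0; lra.
        by rewrite ler_pdivrMr ?mul1r; lra.
      by field; rewrite subr_eq0; apply/eqP => h; lra.
    exists 0; split; first by apply/andP; split; lra.
    lra.
  apply: (conv_mix ht cU cL) => /= [i|]; last exact: hzt.
  by rewrite xu /xof /=; ring.
move=> heq.
pose h : R := 2^-1.
pose p0 : point R n := (fun _ => h, 0).
have hbox : in_box p0.1 by move=> i /=; rewrite /h; apply/andP; split; lra.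
have hq : Qset e a p0.
  split => //; exists (fun _ _ => 0); split.
    split => // i j _ _ /=; split; rewrite /h; try lra; apply/andP; split; lra.
  by rewrite /= big1 // => i _; rewrite big1 // => j _; rewrite mulr0.
have [m [lam [pts [A B C D E]]]] := (heq p0).1 hq.
have hx : forall k i, 0 <= (pts k).1 i <= 1 := fun k => (C k).1.
have hb0 : forall k, 0 <= lam k * bilin e a (pts k).1.
  move=> k; apply: mulr_ge0; first exact: A.
  apply: sumr_ge0 => i _; apply: sumr_ge0 => j hj; exact: @bilin_ge0 _ _ e a (pts k).1 apos (C k).1 _ _ hj.
have E' : \sum_(k < m) lam k * bilin e a (pts k).1 = p0.2.
  by rewrite E; apply: eq_bigr => k _; rewrite (C k).2.
have hk0 : forall k, lam k * bilin e a (pts k).1 = 0.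
  by move=> k; exact: (@psumr_eq0P _ _ _ _ (fun k _ => hb0 k) E' k isT).
have ebil : forall k, lam k != 0 -> forall i j : 'I_n, (i < j)%N -> e i j -> (pts k).1 i * (pts k).1 j = 0.
  move=> k hl i j hij hej.
  have hbil0 : bilin e a (pts k).1 = 0.
    by move/eqP: (hk0 k); rewrite mulf_eq0 (negbTE hl) /= => /eqP.
  have Fge : forall i : 'I_n, true -> 0 <= \sum_(j < n | (i < j)%N && e i j)
      a i j * (pts k).1 i * (pts k).1 j.
    move=> i0 _; apply: sumr_ge0 => j0 hj0; exact: @bilin_ge0 _ _ e a (pts k).1 apos (C k).1 _ _ hj0.
  have hi := @psumr_eq0P _ _ _ _ Fge hbil0 i isT.
  have := @psumr_eq0P _ _ _ _ (fun j0 hj0 => @bilin_ge0 _ _ e a (pts k).1 apos (C k).1 _ _ hj0) hi j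
    (introT andP (conj hij hej)).
  move=> /eqP; rewrite -mulrA mulf_eq0 => /orP[/eqP ha|/eqP //].
  by have := apos i j hij hej; rewrite ha ltxx.
have esum : forall k, lam k != 0 -> forall i j : 'I_n, (i < j)%N -> e i j -> (pts k).1 i + (pts k).1 j = 1.
  move=> k hl i j hij hej.
  have Gge : forall k, true -> 0 <= lam k * (1 - (pts k).1 i - (pts k).1 j).
    move=> k0 _; have [hl0|hl0] := eqVneq (lam k0) 0; first by rewrite hl0 mul0r.
    apply: mulr_ge0; first exact: A.
    have := ebil k0 hl0 i j hij hej; move/eqP; rewrite mulf_eq0 => /orP[/eqP h0|/eqP h0];
      case/andP: (hx k0 i) => ? ?; case/andP: (hx k0 j) => ? ?; lra.
  have Gs : \sum_(k < m) lam k * (1 - (pts k).1 i - (pts k).1 j) = 0.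
    have -> : \sum_(k < m) lam k * (1 - (pts k).1 i - (pts k).1 j) =
      \sum_(k < m) lam k - \sum_(k < m) lam k * (pts k).1 i - \sum_(k < m) lam k * (pts k).1 j.
      rewrite -!sumrB; apply: eq_bigr => k0 _; ring.
    by rewrite B -D -D /= /h; lra.
  have := @psumr_eq0P _ _ _ _ Gge Gs k isT.
  move/eqP; rewrite mulf_eq0 (negbTE hl) /= => /eqP; lra.
have [k0 hl0] : exists k, lam k != 0.
  case: (pickP (fun k => lam k != 0)) => [k hk|hn]; first by exists k.
  move: B; rewrite big1 => [|k _]; last by move: (hn k) => /negbFE /eqP.
  by move=> /eqP; rewrite eq_sym oner_eq0.
exists (fun i => (pts k0).1 i == 0) => i j hij.
case: (ltngtP i j) => [lt|gt|eq].
- exact: two_col (ebil k0 hl0 i j lt hij) (esum k0 hl0 i j lt hij).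
- rewrite esym in hij; rewrite eq_sym.
  exact: two_col (ebil k0 hl0 j i gt hij) (esum k0 hl0 j i gt hij).
- by move: hij; rewrite (val_inj eq) (negbTE (eirr j)).
Qed.
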